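(* Let $X$ be an $R$-module, $S\subseteq X$ an $M$-$m$-system, and $P$ a submodule of $X$ maximal with respect to $P\cap S=\emptyset$. Then $P$ is an $M$-prime submodule of $X$.
   Context: $R$ is a ring with identity, modules are unital left $R$-modules, $M$ is a fixed left $R$-module. For $N\le M$ and a module $X$, $N\cdot X$ is the intersection of the kernels of all homomorphisms $X\to W$ where $W$ ranges over modules with $f(N)=0$ for all $f\in\mathrm{Hom}_R(M,W)$ (for $Z\le X$, $N\cdot Z$ is formed regarding $Z$ as a module). A proper submodule $P$ of $X$ is $M$-prime if for all $N\le M$, $Y\le X$, $N\cdot Y\subseteq P$ implies $N\cdot X\subseteq P$ or $Y\subseteq P$. A nonempty set $S\subseteq X\setminus\{0\}$ is an $M$-$m$-system if for every submodule $N\le M$ and all submodules $Y,Z\le X$: if $(Y+Z)\cap S\neq\emptyset$ and $(Y+N\cdot X)\cap S\neq\emptyset$, then $(Y+N\cdot Z)\cap S\neq\emptyset$. *)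

(* Defs.v *)
(* R : a ring with identity (pzRingType, possibly noncommutative);
   modules are unital left R-modules = lmodType R. Submodules are Prop-valued
   predicates closed under 0, + and scaling. *)
From HB Require Import structures.
From mathcomp Require Import all_boot all_order all_algebra.
Set Implicit Arguments. Unset Strict Implicit. Unset Printing Implicit Defensive.
Import GRing.Theory.
Local Open Scope ring_scope.

Section ModDefs.
Variable R : pzRingType.

Definition is_submodule (X : lmodType R) (A : X -> Prop) : Prop :=
  A 0 /\ (forall x y, A x -> A y -> A (x + y)) /\
  (forall (r : R) x, A x -> A (r *: x)).

Definition hom_on (X W : lmodType R) (Z : X -> Prop) (f : X -> W) : Prop :=
  (forall x y, Z x -> Z y -> f (x + y) = f x + f y) /\
  (forall (r : R) x, Z x -> f (r *: x) = r *: f x).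

Definition is_hom (X W : lmodType R) (f : X -> W) : Prop :=
  hom_on (fun _ => True) f.

Definition subm_sum (X : lmodType R) (A B : X -> Prop) : X -> Prop :=
  fun x => exists a b, A a /\ B b /\ x = a + b.

Definition prod_sub (M X : lmodType R) (N : M -> Prop) (Z : X -> Prop) : X -> Prop :=
  fun x => Z x /\
    forall W : lmodType R,
      (forall g : M -> W, is_hom g -> forall n, N n -> g n = 0) ->
      forall f : X -> W, hom_on Z f -> f x = 0.

Definition M_prime (M X : lmodType R) (P : X -> Prop) : Prop :=
  is_submodule P /\ (exists x, ~ P x) /\
  forall (N : M -> Prop) (Y : X -> Prop), is_submodule N -> is_submodule Y ->
    (forall x, prod_sub N Y x -> P x) ->
    (forall x, prod_sub N (fun _ => True) x -> P x) \/ (forall x, Y x -> P x).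

Definition M_m_system (M X : lmodType R) (S : X -> Prop) : Prop :=
  (exists s, S s) /\ (forall s, S s -> s <> 0) /\
  forall (N : M -> Prop) (Y Z : X -> Prop),
    is_submodule N -> is_submodule Y -> is_submodule Z ->
    (exists s, S s /\ subm_sum Y Z s) ->
    (exists s, S s /\ subm_sum Y (prod_sub N (fun _ => True)) s) ->
    exists s, S s /\ subm_sum Y (prod_sub N Z) s.

End ModDefs.

(* Main.v *)
Require Import Defs.
From mathcomp Require Import all_boot all_order all_algebra.
From Stdlib Require Import Classical.
Import GRing.Theory.
Local Open Scope ring_scope.

Lemma sum_sub (R : pzRingType) (X : lmodType R) (A B : X -> Prop) :
  is_submodule A -> is_submodule B -> is_submodule (subm_sum A B).
Proof.
move=> [A0 [AD AZ]] [B0 [BD BZ]]; split; [|split].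
- exists 0, 0; split; [by []|split; [by []|by rewrite addr0]].
- move=> x y [a [b [Ha [Hb ->]]]] [a' [b' [Ha' [Hb' ->]]]].
  exists (a + a'), (b + b'); split; [exact: AD|split; [exact: BD|]].
  by rewrite addrACA.
- move=> r x [a [b [Ha [Hb ->]]]]; exists (r *: a), (r *: b).
  split; [exact: AZ|split; [exact: BZ|by rewrite scalerDr]].
Qed.

Lemma prod_sub_sub (R : pzRingType) (M X : lmodType R) (N : M -> Prop) (Z : X -> Prop) :
  is_submodule Z -> is_submodule (prod_sub N Z).
Proof.
move=> [Z0 [ZD ZZ]]; split; [|split].
- split => // W _ f [fD fZ].
  have := fD 0 0 Z0 Z0; rewrite addr0 => h.
  by apply: (addrI (f 0)); rewrite addr0 -h.
- move=> x y [Zx Hx] [Zy Hy]; split; first exact: ZD.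
  move=> W HW f Hf; have [fD _] := Hf.
  by rewrite fD // (Hx W HW f Hf) (Hy W HW f Hf) addr0.
- move=> r x [Zx Hx]; split; first exact: ZZ.
  move=> W HW f Hf; have [_ fZ] := Hf.
  by rewrite fZ // (Hx W HW f Hf) scaler0.
Qed.

Theorem proposition2p15 (R : pzRingType) (M X : lmodType R)
    (S : X -> Prop) (P : X -> Prop) :
  M_m_system M S ->
  is_submodule P ->
  (forall x, P x -> ~ S x) ->
  (forall Q : X -> Prop, is_submodule Q -> (forall x, P x -> Q x) ->
     (forall x, Q x -> ~ S x) -> forall x, Q x -> P x) ->
  M_prime M P.
Proof.
move=> [[s0 Ss0] [_ Hm]] HP PS Hmax.
have HP' := HP; move: HP' => [P0 [PD PZ]].
split; first exact: HP.
split; first by exists s0 => Ps0; exact: (PS s0 Ps0 Ss0).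
have meet : forall Q : X -> Prop, is_submodule Q -> (forall x, P x -> Q x) ->
    (exists y, Q y /\ ~ P y) -> exists s, S s /\ Q s.
  move=> Q HQ PQ [y [Qy nPy]].
  apply: NNPP => nE; apply: nPy; apply: (Hmax Q HQ PQ) => // x Qx Sx.
  by apply: nE; exists x.
have sumP : forall B : X -> Prop, forall x, P x -> subm_sum P B x -> True by [].
move=> N Y HN HY HNY.
destruct (classic (forall x, prod_sub N (fun _ => True) x -> P x)) as [h|h]; [by left|right].
apply: NNPP => hY.
have [y [Yy nPy]] : exists y, Y y /\ ~ P y.
  apply: NNPP => e; apply: hY => x Yx; apply: NNPP => nPx; apply: e; by exists x.
have [z [Nz nPz]] : exists z, prod_sub N (fun _ => True) z /\ ~ P z.
  apply: NNPP => e; apply: h => x Nx; apply: NNPP => nPx; apply: e; by exists x.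
have HB : is_submodule (fun _ : X => True) by split; [|split].
have inl : forall (B : X -> Prop), is_submodule B -> forall x, P x -> subm_sum P B x.
  move=> B [B0 _] x Px; exists x, 0; split => //; split => //; by rewrite addr0.
have inr : forall (B : X -> Prop), is_submodule B -> forall x, B x -> subm_sum P B x.
  move=> B _ x Bx; exists 0, x; split => //; split => //; by rewrite add0r.
have [s1 [Ss1 Q1]] := meet _ (@sum_sub _ _ _ _ HP HY) (inl _ HY) (ex_intro _ y (conj (inr _ HY _ Yy) nPy)).
have HNX := @prod_sub_sub _ M X N _ HB.
have [s2 [Ss2 Q2]] := meet _ (@sum_sub _ _ _ _ HP HNX) (inl _ HNX) (ex_intro _ z (conj (inr _ HNX _ Nz) nPz)).
have [s [Ss [a [b [Pa [Nb Es]]]]]] :=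
  Hm N P Y HN HP HY (ex_intro _ s1 (conj Ss1 Q1)) (ex_intro _ s2 (conj Ss2 Q2)).
apply: (PS _ _ Ss); rewrite Es; apply: PD => //; exact: HNY.
Qed.
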